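(* Let $K$ be the irreducible cyclic code of length $n$ over $GF(q)$ with monic irreducible parity-check polynomial of degree $m>1$ and order $n\ne q^m-1$, and let $d=\gcd(q-1,n)$, $r=n/d$, $R=(q^m-1)/(q-1)$, $b=(q-1)/d$, and $s$ the number of cycles of nonzero codewords of $K$. If $s=b$, then $K$ is equidistant, i.e. all nonzero codewords of $K$ have the same Hamming weight. Moreover, the conditions $s=b$, $r=R$, and $\gcd(s,R)=1$ are equivalent.
   Context: Let $q>2$ be a prime power. $A_n=GF(q)[x]/(x^n-1)$; Hamming weight of an element = number of nonzero coefficients of its representative of degree $<n$. The order of $h$ is the least $e\ge1$ with $h\mid x^e-1$. $K$ is the ideal of $A_n$ generated by $(x^n-1)/h(x)$. The cycle of nonzero $z$ is $\{x^iz:i\ge0\}$. *)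

(* Defs.v *)
From HB Require Import structures.
From mathcomp Require Import all_boot all_order all_algebra all_field.
From Stdlib Require Import ClassicalEpsilon.
Set Implicit Arguments. Unset Strict Implicit. Unset Printing Implicit Defensive.
Import GRing.Theory.
Local Open Scope ring_scope.

Definition pbool (P : Prop) : bool :=
  if excluded_middle_informative P then true else false.

Section Cyclic.
Variable F : finFieldType.

Definition poly_order (h : {poly F}) (n : nat) : Prop :=
  [/\ (0 < n)%N, h %| 'X^n - 1 &
      forall e : nat, (0 < e)%N -> h %| 'X^e - 1 -> (n <= e)%N].

(* Elements of A_n = GF(q)[x]/(x^n-1) are represented by their coefficient
   vectors (representative of degree < n); rVpoly gives the representative. *)

Definition code (n : nat) (h : {poly F}) : {set 'rV[F]_n} :=
  [set v : 'rV[F]_n | pbool (exists a : {poly F},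
      rVpoly v = (a * (('X^n - 1) %/ h)) %% ('X^n - 1))].

Definition wt (n : nat) (v : 'rV[F]_n) : nat := #|[set i : 'I_n | v 0 i != 0]|.

Definition cycle_of (n : nat) (z : 'rV[F]_n) : {set 'rV[F]_n} :=
  [set w : 'rV[F]_n | pbool (exists i : nat,
      rVpoly w = ('X^i * rVpoly z) %% ('X^n - 1))].

Definition num_cycles (n : nat) (h : {poly F}) : nat :=
  #|[set cycle_of z | z in code n h :\ 0]|.

End Cyclic.

(* Main.v *)
Require Import Defs.
From HB Require Import structures.
From mathcomp Require Import all_boot all_order all_algebra all_field.
From Stdlib Require Import ClassicalEpsilon.
Import GRing.Theory.
Local Open Scope ring_scope.

Lemma pboolP (Q : Prop) : pbool Q = true <-> Q.
Proof. by rewrite /pbool; case: excluded_middle_informative. Qed.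

Lemma modeqP (F : fieldType) (d p q : {poly F}) :
  (p %% d == q %% d) = (d %| p - q).
Proof.
apply/idP/idP => [/eqP e | /modp_eq0P e].
  by apply/modp_eq0P; rewrite modpD modpN e subrr.
by apply/eqP; apply: subr0_eq; rewrite -modpN -modpD.
Qed.

Section Main.
Variable F : finFieldType.
Variables (h : {poly F}) (n : nat).
Hypothesis hirr : irreducible_poly h.
Hypothesis hord : poly_order h n.

Local Notation P := ('X^n - 1 : {poly F}).
Local Notation g := (('X^n - 1) %/ h : {poly F}).

Lemma n_gt0 : (0 < n)%N.
Proof. by case: hord. Qed.

Lemma hP : h %| P.
Proof. by case: hord. Qed.

Lemma size_P : size P = n.+1.
Proof. by rewrite -polyC1 size_XnsubC // n_gt0. Qed.

Lemma P_neq0 : P != 0.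
Proof. by rewrite -size_poly_eq0 size_P. Qed.

Lemma Pgh : P = h * g.
Proof. by rewrite mulrC divpK // hP. Qed.

Lemma g_neq0 : g != 0.
Proof. by apply: contra P_neq0 => /eqP e; rewrite Pgh e mulr0. Qed.

Lemma h_neq0 : h != 0.
Proof. by apply: contra P_neq0 => /eqP e; rewrite Pgh e mul0r. Qed.

Lemma size_h : (1 < size h)%N.
Proof. by case: hirr. Qed.

Lemma coprime_hX k : coprimep h ('X^k).
Proof.
apply: coprimep_expr.
have -> : ('X : {poly F}) = 'X - 0%:P by rewrite subr0.
rewrite coprimep_XsubC; apply/negP => /rootP h0.
have : P.[0] = 0 by rewrite Pgh hornerM h0 mul0r.
by rewrite hornerD hornerN hornerXn hornerC expr0n eqn0Ngt n_gt0 /= sub0r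
   => /eqP; rewrite oppr_eq0 oner_eq0.
Qed.

Lemma dvd_XsubX1 (j k : nat) : ('X^j - 1 : {poly F}) %| 'X^(j * k) - 1.
Proof.
rewrite exprM -{2}(expr1n _ k) subrXX; exact: dvdp_mulr.
Qed.

Lemma order_dvd e : h %| 'X^e - 1 -> (n %| e)%N.
Proof.
move=> he.
have e1 : ('X^e - 1 : {poly F}) = 'X^(e %% n) * ('X^(n * (e %/ n)) - 1) + ('X^(e %% n) - 1).
  rewrite {1}(divn_eq e n) mulrBr mulr1 -exprD addrA subrK.
  by rewrite mulnC addnC.
move: he; rewrite e1 dvdp_addr; last first.
  by apply: dvdp_mull; apply: dvdp_trans hP _; apply: dvd_XsubX1.
move=> h2; case: (posnP (e %% n)) => [/eqP|] // pos.
case: hord => _ _ /(_ _ pos h2); rewrite leqNgt ltn_mod n_gt0.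
done.
Qed.


Lemma L1 (a : {poly F}) : ((a * g) %% P == 0) = (h %| a).
Proof.
apply/eqP/idP => [/modp_eq0P|ha]; first by rewrite {1}Pgh dvdp_mul2r // g_neq0.
by apply/modp_eq0P; rewrite {1}Pgh dvdp_mul2r // g_neq0.
Qed.

Lemma Lker (u a : {poly F}) : ~~ (h %| a) -> ((u * ((a * g) %% P)) %% P == 0) = (h %| u).
Proof.
move=> ha; rewrite modp_mul mulrA L1 Gauss_dvdpl //.
by rewrite irreducible_poly_coprime.
Qed.

Lemma mod_Xn i k (p : {poly F}) : ('X^(i + n * k) * p) %% P = ('X^i * p) %% P.
Proof.
apply/eqP; rewrite modeqP.
have -> : 'X^(i + n * k) * p - 'X^i * p = ('X^(n * k) - 1) * ('X^i * p).
  by rewrite mulrBl mul1r exprD mulrA (mulrC 'X^(n * k)).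
by rewrite dvdp_mulr // dvd_XsubX1.
Qed.

Lemma size_modP (p : {poly F}) : (size (p %% P)%R <= n)%N.
Proof. by rewrite -ltnS -size_P ltn_modp P_neq0. Qed.

Definition pw (p : {poly F}) := #|[set j : 'I_n | p`_j != 0]|.

Lemma wt_pw (v : 'rV[F]_n) : wt v = pw (rVpoly v).
Proof. by apply: eq_card => j; rewrite !inE coef_rVpoly_ord. Qed.

Lemma pwZ (c : F) (p : {poly F}) : c != 0 -> pw (c *: p) = pw p.
Proof. by move=> c0; apply: eq_card => j; rewrite !inE coefZ mulf_eq0 negb_or c0. Qed.

Lemma shift_mod (p : {poly F}) : (size p <= n)%N -> ('X * p) %% P = 'X * p - (p`_n.-1)%:P * P.
Proof.
move=> sp; apply/esym/(@modpP _ _ (p`_n.-1)%:P); first by rewrite addrC subrK.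
rewrite size_P ltnS; apply/leq_sizeP => j jn.
rewrite coefB coefXM coefCM coefB coefXn coef1.
case: (ltngtP n j) jn => // [nj|<-] _.
  have j0 : (j == 0%N) = false by apply/negbTE; rewrite -lt0n (leq_ltn_trans (leq0n _) nj).
  rewrite j0 /= subrr mulr0 subr0.
  apply: (leq_sizeP _ _ sp).
  by rewrite -ltnS prednK // (leq_ltn_trans (leq0n _) nj).
have j0 : (n == 0%N) = false by rewrite eqn0Ngt n_gt0.
by rewrite j0 /= subr0 mulr1 subrr.
Qed.

Lemma coef_shift (p : {poly F}) (j : 'I_n) : (size p <= n)%N ->
  (('X * p) %% P)`_(ordS j) = p`_j.
Proof.
move=> sp; rewrite shift_mod // coefB coefXM coefCM coefB coefXn coef1 /=.
have jn := ltn_ord j.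
case: (ltngtP j.+1 n) => [lt||jeq]; last first.
- rewrite jeq modnn eqxx eq_sym (negbTE (lt0n_neq0 n_gt0)) /= sub0r sub0r mulrN1 opprK.
  by congr (p`_ _); apply/eqP; rewrite -eqSS prednK ?n_gt0 // jeq.
- by rewrite ltnNge jn.
rewrite modn_small // (ltn_eqF lt) /= subrr mulr0 subr0. done.
Qed.

Lemma pw_shift (p : {poly F}) : (size p <= n)%N -> pw (('X * p) %% P) = pw p.
Proof.
move=> sp; rewrite /pw -(card_preimset _ (@ordS_inj n)).
by apply: eq_card => j; rewrite !inE coef_shift.
Qed.

Lemma pw_shiftX i (p : {poly F}) : (size p <= n)%N -> pw (('X^i * p) %% P) = pw p.
Proof.
move=> sp; elim: i => [|i IH].
  by rewrite expr0 mul1r modp_small // size_P ltnS.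
by rewrite exprS -mulrA -modp_mul pw_shift // size_modP.
Qed.


Lemma size_rV (v : 'rV[F]_n) : (size (rVpoly v) <= n)%N.
Proof. exact: size_poly. Qed.

Lemma in_code (v : 'rV[F]_n) :
  v \in code n h <-> exists a, rVpoly v = (a * g) %% P.
Proof. by rewrite inE; apply: pboolP. Qed.

Lemma in_cycle (w z : 'rV[F]_n) :
  w \in cycle_of z <-> exists i, rVpoly w = ('X^i * rVpoly z) %% P.
Proof. by rewrite inE; apply: pboolP. Qed.

Local Notation K0 := (code n h :\ 0).

Lemma K0_wit (z : 'rV[F]_n) : z \in K0 -> exists2 a, rVpoly z = (a * g) %% P & ~~ (h %| a).
Proof.
move=> /setD1P [z0 /in_code [a za]]; exists a => //; apply: contra z0 => ha.
have := L1 a; rewrite ha => /eqP e.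
by rewrite -[z]rVpolyK za e linear0.
Qed.

Lemma hnX i : ~~ (h %| 'X^i).
Proof.
have := Gauss_dvdpr 1 (coprime_hX i); rewrite mulr1 dvdp1 => ->.
by rewrite neq_ltn size_h orbT.
Qed.

Lemma Xdiff (i j : nat) : (i < n)%N -> (j < n)%N -> h %| 'X^i - 'X^j -> i = j.
Proof.
wlog le : i j / (j <= i)%N => [hw|].
  case/orP: (leq_total j i) => [ji|ij]; first exact: hw.
  move=> ilt jlt hd; apply/esym/hw => //; by rewrite -dvdpNr opprB.
move=> ilt jlt.
have -> : ('X^i - 'X^j : {poly F}) = 'X^j * ('X^(i-j) - 1).
  by rewrite mulrBr mulr1 -exprD subnKC.
rewrite Gauss_dvdpr ?coprime_hX // => /order_dvd dv.
case: (posnP (i - j)) => [/eqP|pos].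
  by rewrite subn_eq0 => ij; apply/eqP; rewrite eqn_leq ij le.
have := dvdn_leq pos dv; rewrite leqNgt (leq_ltn_trans (leq_subr j i) ilt).
done.
Qed.

Definition cyc (z : 'rV[F]_n) (i : nat) : 'rV[F]_n := poly_rV (('X^i * rVpoly z) %% P).

Lemma rV_cyc (z : 'rV[F]_n) i : rVpoly (cyc z i) = ('X^i * rVpoly z) %% P.
Proof. exact: poly_rV_K (size_modP _). Qed.

Lemma cycle_eq (z : 'rV[F]_n) : cycle_of z = (fun i : 'I_n => cyc z i) @: setT.
Proof.
apply/setP => w; apply/idP/imsetP.
  move/in_cycle => [k wk]; exists (Ordinal (ltn_pmod k n_gt0)) => //.
  apply: (can_inj rVpolyK); rewrite rV_cyc wk /=.
  by rewrite {1}(divn_eq k n) addnC mulnC mod_Xn.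
by move=> [i _ ->]; apply/in_cycle; exists i; exact: rV_cyc.
Qed.

Lemma card_cycle (z : 'rV[F]_n) : z \in K0 -> #|cycle_of z| = n.
Proof.
move=> /K0_wit [a za ha].
rewrite cycle_eq card_imset ?cardsT ?card_ord // => i j.
move/(congr1 rVpoly); rewrite !rV_cyc => /eqP; rewrite modeqP -mulrBl za.
move/modp_eq0P/eqP; rewrite Lker // => /Xdiff hh.
by apply: val_inj; apply: hh.
Qed.

Lemma cycle_sub (z w : 'rV[F]_n) : w \in cycle_of z -> cycle_of w \subset cycle_of z.
Proof.
move/in_cycle => [i wi]; apply/subsetP => w' /in_cycle [j wj].
by apply/in_cycle; exists (j + i)%N; rewrite wj wi modp_mul mulrA -exprD.
Qed.

Lemma cycle_sym (z w : 'rV[F]_n) : w \in cycle_of z -> z \in cycle_of w.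
Proof.
move/in_cycle => [i wi]; apply/in_cycle; exists (n.-1 * i)%N.
rewrite wi modp_mul mulrA -exprD -mulSnr prednK ?n_gt0 //.
by rewrite -(add0n (n * i)%N) mod_Xn expr0 mul1r modp_small // size_P ltnS size_rV.
Qed.

Lemma cycle_self (z : 'rV[F]_n) : z \in cycle_of z.
Proof.
by apply/in_cycle; exists 0%N; rewrite expr0 mul1r modp_small // size_P ltnS size_rV.
Qed.

Lemma cycle_same (z w : 'rV[F]_n) : w \in cycle_of z -> cycle_of w = cycle_of z.
Proof.
move=> wz; apply/eqP; rewrite eqEsubset cycle_sub //=.
by apply: cycle_sub; apply: cycle_sym.
Qed.

Lemma cycle_K0 (z : 'rV[F]_n) : z \in K0 -> cycle_of z \subset K0.
Proof.
move=> /K0_wit [a za ha]; apply/subsetP => w /in_cycle [i wi].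
apply/setD1P; split.
  apply: contra (hnX i) => /eqP w0.
  by rewrite -(Lker ('X^i) a ha) -za -wi w0 linear0.
by apply/in_code; exists ('X^i * a); rewrite wi za modp_mul mulrA.
Qed.

Lemma num_cycles_n : (#|K0| = num_cycles n h * n)%N.
Proof.
apply: card_uniform_partition.
  by move=> A /imsetP [z zK ->]; apply: card_cycle.
apply/and3P; split.
- rewrite eqEsubset; apply/andP; split; apply/subsetP => x.
    by move/bigcupP => [A /imsetP [z zK ->]]; apply/subsetP/cycle_K0.
  move=> xK; apply/bigcupP; exists (cycle_of x); last exact: cycle_self.
  by apply/imsetP; exists x.
- apply/trivIsetP => A B /imsetP [a _ ->] /imsetP [b _ ->] AB.
  rewrite -setI_eq0; apply/eqP/setP => x; rewrite in_set0.
  apply/negbTE; apply: contra AB => /setIP [xa xb].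
  by rewrite -(cycle_same _ _ xa) -(cycle_same _ _ xb).
- apply/imsetP => -[z _ e].
  by have := cycle_self z; rewrite -e inE.
Qed.


Variable m : nat.
Hypothesis hm : size h = m.+1.

Lemma card_code : #|code n h| = (#|F| ^ m)%N.
Proof.
have -> : code n h = (fun a : 'rV[F]_m => (poly_rV ((rVpoly a * g) %% P) : 'rV[F]_n)) @: setT.
  apply/setP => v; apply/idP/imsetP.
    move/in_code => [a va]; exists (poly_rV (a %% h)) => //.
    apply: (can_inj rVpolyK); rewrite poly_rV_K ?size_modP // poly_rV_K; last first.
      by rewrite -ltnS -hm ltn_modp h_neq0.
    rewrite va; apply/eqP; rewrite modeqP -mulrBl {1}(divp_eq a h) addrK.
    by rewrite -mulrA -Pgh dvdp_mull.
  by move=> [a _ ->]; apply/in_code; exists (rVpoly a); rewrite poly_rV_K ?size_modP.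
rewrite card_imset ?cardsT ?card_mx ?mul1n // => x y /(congr1 rVpoly).
rewrite !poly_rV_K ?size_modP // => /eqP; rewrite modeqP -mulrBl -linearB.
move/modp_eq0P/eqP; rewrite L1 => hd.
apply/eqP; rewrite -subr_eq0; apply/eqP; apply: (can_inj rVpolyK).
rewrite linear0; apply/eqP; apply: contraT => nz.
have := dvdp_leq nz hd; rewrite hm ltnNge.
by rewrite (_ : (size (rVpoly (x - y)) <= m)%N) //; exact: size_poly.
Qed.

Lemma card_K0 : #|K0| = (#|F| ^ m - 1)%N.
Proof.
have := cardsD1 0 (code n h); rewrite card_code.
have -> : (0 : 'rV[F]_n) \in code n h.
  by apply/in_code; exists 0; rewrite linear0 mul0r mod0p.
by move=> ->; rewrite add1n subn1.
Qed.


Local Notation q := #|F|.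
Local Notation d := (gcdn (q - 1) n).
Local Notation r := (n %/ d)%N.
Local Notation b := ((q - 1) %/ d)%N.

Lemma q_gt0 : (0 < q)%N.
Proof. by apply/card_gt0P; exists 0. Qed.

Lemma d_gt0 : (0 < d)%N.
Proof. by rewrite gcdn_gt0 n_gt0 orbT. Qed.

Lemma n_rd : n = (r * d)%N.
Proof. by rewrite divnK // dvdn_gcdr. Qed.

Lemma q_bd : (q - 1 = b * d)%N.
Proof. by rewrite divnK // dvdn_gcdl. Qed.

Lemma coprime_rb : coprime r b.
Proof.
rewrite /coprime -(eqn_pmul2r d_gt0) mul1n muln_gcdl -n_rd -q_bd gcdnC.
done.
Qed.

Lemma c_pow (c : F) : c != 0 -> c ^+ (q - 1) = 1.
Proof.
move=> c0; apply: (mulIf c0); rewrite mul1r -exprSr subn1 prednK ?q_gt0 //.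
exact: expf_card.
Qed.

Lemma L4 k (c : F) : c != 0 -> h %| 'X^k - c%:P -> (r %| k)%N.
Proof.
move=> c0 hk.
have : h %| ('X^k) ^+ (q - 1) - (c%:P) ^+ (q - 1).
  by rewrite subrXX; apply: dvdp_mulr.
rewrite -rmorphXn c_pow // -exprM => /order_dvd dv.
have : (r * d %| k * b * d)%N by rewrite -mulnA -q_bd -n_rd.
rewrite dvdn_pmul2r ?d_gt0 // mulnC Gauss_dvdr //.
exact: coprime_rb.
Qed.

Lemma L5 (c c' : F) (i j : nat) : c != 0 -> c' != 0 -> (i < r)%N -> (j < r)%N ->
  h %| c *: 'X^i - c' *: 'X^j -> i = j /\ c = c'.
Proof.
wlog le : c c' i j / (j <= i)%N => [hw|].
  case/orP: (leq_total j i) => [ji|ij]; first exact: hw.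
  move=> c0 c'0 ilt jlt hd.
  have [-> ->] // : j = i /\ c' = c by apply: hw => //; rewrite -dvdpNr opprB.
move=> c0 c'0 ilt jlt hd.
have e : c *: 'X^i - c' *: 'X^j = 'X^j * (c *: 'X^(i - j) - c'%:P) :> {poly F}.
  by rewrite mulrBr -scalerAr -exprD subnKC // mulrC mul_polyC.
have ij : i = j.
  move: hd; rewrite e Gauss_dvdpr ?coprime_hX // -(dvdpZr _ _ (invr_neq0 c0)).
  rewrite scalerBr scalerA mulVf // scale1r -mul_polyC -polyCM => /L4.
  rewrite mulf_neq0 ?invr_neq0 // => /(_ isT) dv.
  case: (posnP (i - j)) => [/eqP|pos].
    by rewrite subn_eq0 => ij; apply/eqP; rewrite eqn_leq ij le.
  have := dvdn_leq pos dv; rewrite leqNgt (leq_ltn_trans (leq_subr j i) ilt).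
  done.
split => //; subst j.
apply/eqP; rewrite -subr_eq0; apply/negP => /negP cc.
by move: hd; rewrite -scalerBl dvdpZr // (negbTE (hnX i)).
Qed.


Lemma equi (z u : 'rV[F]_n) : num_cycles n h = b -> z \in K0 -> u \in K0 -> wt u = wt z.
Proof.
move=> hs zK uK; have [a za ha] := K0_wit _ zK.
pose f (x : F * 'I_r) : 'rV[F]_n := poly_rV (x.1 *: (('X^(x.2) * rVpoly z) %% P)).
have rV_f x : rVpoly (f x) = x.1 *: (('X^(x.2) * rVpoly z) %% P).
  by rewrite poly_rV_K // (leq_trans (size_scale_leq _ _)) ?size_modP.
pose D := setX [set~ (0 : F)] [set: 'I_r].
have memD c i : ((c, i) \in D) = (c != 0) by rewrite !inE andbT.
have wf x : x \in D -> wt (f x) = wt z.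
  case: x => c i; rewrite memD => c0.
  by rewrite !wt_pw rV_f pwZ // pw_shiftX // size_rV.
have sub : f @: D \subset K0.
  apply/subsetP => w /imsetP [[c i]]; rewrite memD => c0 ->.
  apply/setD1P; split.
    apply: contra (hnX i) => /eqP w0.
    have := congr1 rVpoly w0; rewrite rV_f linear0 => /eqP.
    rewrite scaler_eq0 (negbTE c0) /= za.
    by rewrite (Lker ('X^i) a ha).
  apply/in_code; exists (c *: 'X^i * a).
  by rewrite rV_f /= za modp_mul -modpZl !scalerAl mulrA.
have inj : {in D &, injective f}.
  move=> [c i] [c' j]; rewrite !memD => c0 c'0.
  move/(congr1 rVpoly); rewrite !rV_f /= -!modpZl !scalerAl => /eqP.
  rewrite modeqP -mulrBl za => /modp_eq0P/eqP; rewrite Lker // => hd.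
  have [ij cc] := L5 _ _ _ _ c0 c'0 (ltn_ord i) (ltn_ord j) hd.
  by rewrite cc; congr pair; apply: val_inj.
have eqD : f @: D = K0.
  apply/eqP; rewrite eqEcard sub /= card_in_imset // cardsX cardsC1 cardsT card_ord.
  rewrite num_cycles_n hs divn_mulAC ?dvdn_gcdl // -muln_divA ?dvdn_gcdr // subn1.
  done.
move: uK; rewrite -eqD => /imsetP [x xD ->].
exact: wf.
Qed.

End Main.

Theorem corollary5 (F : finFieldType) (h : {poly F}) (m n : nat) :
  (2 < #|F|)%N ->
  h \is monic -> irreducible_poly h -> size h = m.+1 -> (1 < m)%N ->
  poly_order h n -> n <> (#|F| ^ m - 1)%N ->
  let q := #|F| in
  let d := gcdn (q - 1) n in
  let r := (n %/ d)%N in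
  let R := ((q ^ m - 1) %/ (q - 1))%N in
  let b := ((q - 1) %/ d)%N in
  let s := num_cycles n h in
  (s = b -> forall u v : 'rV[F]_n, u \in code n h -> v \in code n h ->
       u != 0 -> v != 0 -> wt u = wt v)
  /\ (s = b <-> r = R) /\ (r = R <-> coprime s R).
Proof.
move=> q2 hmon hirr hm m1 hord hne q d r R b s.
have n0 := n_gt0 _ _ _ hord.
have Q0 : (0 < q - 1)%N by rewrite subn_gt0 ltnW.
have QR : (q ^ m - 1 = (q - 1) * R)%N.
  by rewrite /R mulnC divnK // !subn1 predn_exp dvdn_mulr.
have sn : (s * n = (q - 1) * R)%N.
  by rewrite /s -(num_cycles_n _ _ _ hirr hord) (card_K0 _ _ _ hord _ hm) QR.
have nrd : n = (r * d)%N by rewrite /r divnK // dvdn_gcdr.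
have qbd : (q - 1 = b * d)%N by rewrite /b divnK // dvdn_gcdl.
have cop : coprime r b := coprime_rb _ _ _ hord.
have dE : d = gcdn (q - 1) n by [].
have R0 : (0 < R)%N.
  rewrite lt0n; apply/eqP => R0; move: QR; rewrite R0 muln0 => /eqP.
  rewrite subn_eq0 => /(leq_trans (leq_pexp2l (ltnW (ltnW q2)) (ltnW m1))).
  by rewrite expn1 leqNgt (ltn_trans _ q2).
split.
  move=> hs u v uK vK u0 v0.
  apply: (equi _ _ _ hirr hord) => //; by rewrite in_setD1 ?u0 ?v0.
have E1 : s = b <-> r = R.
  split => [hs|hr].
    apply/eqP; rewrite -(eqn_pmul2l Q0) -sn hs {1}nrd qbd.
    by rewrite -mulnA (mulnC d).
  apply/eqP; rewrite -(eqn_pmul2r n0) sn -hr nrd qbd.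
  by rewrite -mulnA (mulnC d).
split => //.
split => [hr|hc].
  by have := proj2 E1 hr => ->; rewrite -hr coprime_sym.
have cRs : coprime R s by rewrite coprime_sym.
have : (R %| n)%N by rewrite -(Gauss_dvdr _ cRs) sn dvdn_mull.
move=> /dvdnP [t nt].
have st : (s * t = q - 1)%N.
  apply/eqP; rewrite -(eqn_pmul2r R0) -mulnA -nt sn mulnC //.
have t0 : (0 < t)%N by move: n0; rewrite nt muln_gt0 => /andP [].
have dt : d = t.
  by rewrite dE -st nt mulnC -muln_gcdr (eqP hc) muln1.
by rewrite /r dt nt mulKn.
Qed.
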